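(* Let $\beta=w\alpha_i\in\Delta_{im}$ with $i\in I^{im}$, $w\in\mathcal W_{re}$, and let $v,v'\in\mathcal W$ with $v'\xrightarrow{\beta}v$, i.e. $v=r_\beta v'$ and $\ell(v)>\ell(v')$. Let $v=r_{i_k}\cdots r_{i_1}$ be an expression of $v$ and $\{x_1<\cdots<x_p\}=\{1\le x\le k:i_x=i\}$. Then $v'=r_{i_k}\cdots\widehat{r_{i_{x_p}}}\cdots r_{i_1}$, i.e. an expression of $v'$ is obtained by omitting the leftmost occurrence of $r_i$.
   Context: $I$ countable, $A=(a_{ij})$ Borcherds–Cartan matrix ($a_{ii}=2$ or $a_{ii}\in\mathbb Z_{\le0}$; $a_{ij}\in\mathbb Z_{\le0}$, $i\ne j$; $a_{ij}=0\iff a_{ji}=0$), $I^{re}=\{a_{ii}=2\}$, $I^{im}=I\setminus I^{re}$; datum $(A,\{\alpha_i\},\{\alpha_i^\vee\},P,P^\vee)$, $\alpha_i^\vee(\alpha_j)=a_{ij}$, linearly independent simple roots/coroots. $r_i(\mu)=\mu-\alpha_i^\vee(\mu)\alpha_i$; $\mathcal W_{re}=\langle r_i:i\in I^{re}\rangle\subset GL(\mathfrak h^* )$; $\Delta_{im}=\mathcal W_{re}\{\alpha_i\}_{i\in I^{im}}$. Monoid $\mathcal W$ generated by $r_i$ ($i\in I$) with relations $r_i^2=1$ ($i$ real), $(r_ir_j)^m=(r_jr_i)^m=1$ for real $i\neq j$ with $r_ir_j$ of order $m\in\{2,3,4,6\}$ in $GL(\mathfrak h^* )$, $r_ir_j=r_jr_i$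 for $i\in I^{im}$, $j\ne i$, $a_{ij}=0$. $\mathcal W_{re}$ is identified with the subgroup of $\mathcal W$ generated by real $r_i$; for $\beta=w\alpha_i$, $r_\beta=wr_iw^{-1}\in\mathcal W$ (well defined). $\ell$ = length function (minimal number of generators). *)

(* Defs.v *)
From HB Require Import structures.
From mathcomp Require Import all_boot all_order all_algebra.
From mathcomp Require Import boolp.
Set Implicit Arguments. Unset Strict Implicit. Unset Printing Implicit Defensive.
Import Order.TTheory GRing.Theory Num.Theory.
Local Open Scope ring_scope.

Definition is_real {I : Type} (A : I -> I -> int) (i : I) : bool := A i i == 2%:Z.

Definition BC_matrix {I : eqType} (A : I -> I -> int) : Prop :=
  (forall i, A i i = 2%:Z \/ A i i <= 0) /\
  (forall i j, i != j -> A i j <= 0) /\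
  (forall i j, A i j = 0 <-> A j i = 0).

(* Realization (h^*, {alpha_i}, {alpha_i^vee}): V plays h^*, cor i : V -> F is
   the pairing with the coroot alpha_i^vee. *)
Definition realization {F : fieldType} {V : lmodType F} {I : eqType}
  (A : I -> I -> int) (alpha : I -> V) (cor : I -> V -> F) : Prop :=
  (forall i (a : F) (x y : V), cor i (a *: x + y) = a * cor i x + cor i y) /\
  (forall i j, cor i (alpha j) = (A i j)%:~R) /\
  (forall (s : seq I) (c : I -> F), uniq s ->
     \sum_(j <- s) c j *: alpha j = 0 -> forall j, j \in s -> c j = 0) /\
  (forall (s : seq I) (c : I -> F), uniq s ->
     (forall x : V, \sum_(j <- s) c j * cor j x = 0) ->
     forall j, j \in s -> c j = 0).

Definition sref {F : fieldType} {V : lmodType F} {I : Type}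
  (alpha : I -> V) (cor : I -> V -> F) (i : I) (mu : V) : V :=
  mu - cor i mu *: alpha i.

Definition fun_order {T : Type} (f : T -> T) (m : nat) : Prop :=
  (0 < m)%N /\ (forall x, iter m f x = x) /\
  (forall k, (0 < k < m)%N -> exists x, iter k f x <> x).

(* Words: [:: j1; ...; jn] represents the product r_j1 ... r_jn in the monoid W.
   Defining relations of W. *)
Inductive wrel {F : fieldType} {V : lmodType F} {I : eqType}
  (A : I -> I -> int) (alpha : I -> V) (cor : I -> V -> F) : seq I -> seq I -> Prop :=
| wrel_sq i : is_real A i -> wrel A alpha cor [:: i; i] [::]
| wrel_braid i j m : is_real A i -> is_real A j -> i != j ->
    m \in [:: 2; 3; 4; 6]%N ->
    fun_order (sref alpha cor i \o sref alpha cor j) m ->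
    wrel A alpha cor (flatten (nseq m [:: i; j])) [::]
| wrel_braid' i j m : is_real A i -> is_real A j -> i != j ->
    m \in [:: 2; 3; 4; 6]%N ->
    fun_order (sref alpha cor i \o sref alpha cor j) m ->
    wrel A alpha cor (flatten (nseq m [:: j; i])) [::]
| wrel_comm i j : ~~ is_real A i -> j != i -> A i j = 0 ->
    wrel A alpha cor [:: i; j] [:: j; i].

Inductive weq {F : fieldType} {V : lmodType F} {I : eqType}
  (A : I -> I -> int) (alpha : I -> V) (cor : I -> V -> F) : seq I -> seq I -> Prop :=
| weq_refl u : weq A alpha cor u u
| weq_sym u v : weq A alpha cor u v -> weq A alpha cor v u
| weq_trans u v w : weq A alpha cor u v -> weq A alpha cor v w -> weq A alpha cor u w
| weq_rel p q u u' : wrel A alpha cor u u' ->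
    weq A alpha cor (p ++ u ++ q) (p ++ u' ++ q).

Lemma wlen_ex {F : fieldType} {V : lmodType F} {I : eqType}
  (A : I -> I -> int) (alpha : I -> V) (cor : I -> V -> F) (s : seq I) :
  exists n, `[< exists u, weq A alpha cor u s /\ size u = n >].
Proof. exists (size s); apply/asboolP; exists s; split=> //; exact: weq_refl. Qed.

Definition wlen {F : fieldType} {V : lmodType F} {I : eqType}
  (A : I -> I -> int) (alpha : I -> V) (cor : I -> V -> F) (s : seq I) : nat :=
  ex_minn (wlen_ex A alpha cor s).

Definition omit_leftmost {I : eqType} (i : I) (s : seq I) : seq I :=
  take (index i s) s ++ drop (index i s).+1 s.

(* Main.v *)
Require Import Defs.
From HB Require Import structures.
From mathcomp Require Import all_boot all_order all_algebra.
Import Order.TTheory GRing.Theory Num.Theory.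
Local Open Scope ring_scope.

Fixpoint dl {I : eqType} (i : I) (l : seq I) : seq I :=
  match l with [::] => [::] | a :: l' => if a == i then l' else a :: dl i l' end.

Lemma omit_dl {I : eqType} (i : I) l : omit_leftmost i l = dl i l.
Proof.
rewrite /omit_leftmost; elim: l => [|a l IH] //=.
case: eqP => [->|_] /=; first by rewrite drop0.
by rewrite IH.
Qed.

Lemma dl_catN {I : eqType} (i : I) p r : i \notin p -> dl i (p ++ r) = p ++ dl i r.
Proof.
elim: p => [|a p IH] //=; rewrite in_cons negb_or => /andP [ha hp].
by rewrite eq_sym (negbTE ha) IH.
Qed.

Lemma dl_catI {I : eqType} (i : I) p r : i \in p -> dl i (p ++ r) = dl i p ++ r.
Proof.
elim: p => [|a p IH] //=; rewrite in_cons => /orP [/eqP->|hp]; first by rewrite eqxx.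
by case: eqP => //= _; rewrite IH.
Qed.

Section W.
Context {F : fieldType} {V : lmodType F} {I : eqType}
  {A : I -> I -> int} {alpha : I -> V} {cor : I -> V -> F}.

Lemma weq_ctx p q u v : weq A alpha cor u v -> weq A alpha cor (p ++ u ++ q) (p ++ v ++ q).
Proof.
elim => [x|x y _ H|x y z _ H1 _ H2|p' q' x x' hr].
- exact: weq_refl.
- exact: weq_sym.
- exact: weq_trans H1 H2.
- have E : forall y, p ++ (p' ++ y ++ q') ++ q = (p ++ p') ++ y ++ (q' ++ q).
    by move=> y; rewrite !catA.
  by rewrite !E; apply: weq_rel.
Qed.

Lemma all_real_nseq a b m : is_real A a -> is_real A b ->
  all (is_real A) (flatten (nseq m [:: a; b])).
Proof. by move=> ha hb; elim: m => //= m ->; rewrite ha hb. Qed.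

Lemma notin_real {i p} : ~~ is_real A i -> all (is_real A) p -> i \notin p.
Proof.
move=> hi /allP hp; apply/negP => /hp; by rewrite (negbTE hi).
Qed.

Lemma wrel_mem {i u u'} : ~~ is_real A i -> wrel A alpha cor u u' ->
  (all (is_real A) u /\ all (is_real A) u') \/
  (exists k j, u = [:: k; j] /\ u' = [:: j; k] /\ j != k).
Proof.
move=> hi [a ha|a b m ha hb _ _ _|a b m ha hb _ _ _|a b ha hba _].
- by left; rewrite /= ha.
- by left; rewrite all_real_nseq.
- by left; rewrite all_real_nseq.
- by right; exists a, b.
Qed.

Lemma weq_mem {i x y} : ~~ is_real A i -> weq A alpha cor x y -> (i \in x) = (i \in y).
Proof.
move=> hi; elim => [//|x' y' _ ->//|x' y' z _ -> _ ->//|p q u u' hr].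
rewrite !mem_cat; case: (wrel_mem hi hr) => [[hu hu']|[k [j [-> [-> _]]]]].
- by rewrite (negbTE (notin_real hi hu)) (negbTE (notin_real hi hu')).
- by rewrite !in_cons !in_nil !orbF (orbC (i == k)).
Qed.

Lemma weq_dl {i x y} : ~~ is_real A i -> weq A alpha cor x y ->
  weq A alpha cor (dl i x) (dl i y).
Proof.
move=> hi; elim => [x'|x' y' _ H|x' y' z _ H1 _ H2|p q u u' hr].
- exact: weq_refl.
- exact: weq_sym.
- exact: weq_trans H1 H2.
case hp: (i \in p).
  by rewrite !dl_catI //; apply: weq_rel.
rewrite !(dl_catN _ p) ?hp //.
case: (wrel_mem hi hr) => [[hu hu']|[k [j [Eu [Eu' hjk]]]]].
  by rewrite (dl_catN _ _ _ (notin_real hi hu)) (dl_catN _ _ _ (notin_real hi hu')); apply: weq_rel.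
subst u u' => /=.
case: (eqVneq k i) => [Ek|hk].
  by subst k; rewrite (negbTE hjk); apply: weq_refl.
case: (eqVneq j i) => [Ej|hj]; first by apply: weq_refl.
exact: (weq_rel p (dl i q) hr).
Qed.

Lemma weq_invol w : all (is_real A) w -> weq A alpha cor (w ++ rev w) [::].
Proof.
elim: w => [|a w IH] /=; first by move=> _; apply: weq_refl.
move=> /andP [ha hw]; rewrite rev_cons -cats1 catA.
change (weq A alpha cor ([:: a] ++ (w ++ rev w) ++ [:: a]) [::]).
eapply weq_trans; first by apply: weq_ctx; apply: IH.
change (weq A alpha cor ([::] ++ [:: a; a] ++ [::]) ([::] ++ [::] ++ [::])).
apply: (weq_rel [::] [::]); exact: wrel_sq.
Qed.

End W.

Theorem corollary2p2p8 (F : numFieldType) (V : lmodType F) (I : countType)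
  (A : I -> I -> int) (alpha : I -> V) (cor : I -> V -> F) :
  BC_matrix A -> realization A alpha cor ->
  forall (i : I) (w : seq I) (beta : V),
  ~~ is_real A i -> all (is_real A) w ->
  beta = foldr (sref alpha cor) (alpha i) w ->
  forall (s t : seq I),
  (* v (given by its expression s) = r_beta v', with r_beta = w r_i w^{-1} *)
  weq A alpha cor s (w ++ [:: i] ++ rev w ++ t) ->
  (wlen A alpha cor t < wlen A alpha cor s)%N ->
  i \in s /\ weq A alpha cor t (omit_leftmost i s).
Proof.
move=> _ _ i w beta hi hw _ s t hs _.
split.
  by rewrite (weq_mem hi hs) mem_cat (negbTE (notin_real hi hw)) /= in_cons eqxx.
rewrite omit_dl; apply: weq_sym; apply: (weq_trans (weq_dl hi hs)).
rewrite (dl_catN _ _ _ (notin_real hi hw)) /= eqxx catA.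
change (weq A alpha cor ([::] ++ (w ++ rev w) ++ t) ([::] ++ [::] ++ t)).
by apply: weq_ctx; apply: weq_invol.
Qed.
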